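(* Let $S,T$ be two causal teams over a signature $\sigma$, or two generalized causal teams over $\sigma$, with $T$ nonempty. Then $S\models\Xi^T$ if and only if $T\not\preccurlyeq S$ (with $\models^c$, respectively $\models^g$).
   Context: A signature $\sigma=(\mathrm{Dom},\mathrm{Ran})$: $\mathrm{Dom}$ nonempty finite set of variables, each with nonempty finite range $\mathrm{Ran}(X)$; $\mathbf X=\mathbf x$ abbreviates $X_1=x_1\wedge\dots\wedge X_n=x_n$ ($\mathbf x\in\prod\mathrm{Ran}(X_i)$), inconsistent if it contains $X=x,X=x'$ with $x\ne x'$. ${=}(V)$ is the constancy atom; $\bot$ abbreviates $X=x\wedge\neg(X=x)$; $\alpha\supset\beta$ abbreviates $\neg\alpha\vee\beta$; empty $\vee$-disjunction is $\bot$. Systems of functions $\mathcal F$: for each $V\in\mathrm{En}(\mathcal F)\subseteq\mathrm{Dom}$ parents $PA^{\mathcal F}_V\subseteq\mathrm{Dom}\setminus\{V\}$ and $\mathcal F_V:\mathrm{Ran}(PA^{\mathcal F}_V)\to\mathrm{Ran}(V)$; $\mathrm{Ex}(\mathcal F)=\mathrm{Dom}\setminus\mathrm{En}(\mathcal F)$; only recursive (acyclic parent graph), forming $\mathbb F_\sigma$. Assignments ($s(X)\in\mathrm{Ran}(X)$) form $\mathbb A_\sigma$; $s$ compatible with $\mathcal F$ if $s(V)=\mathcal F_V(s(PA^{\mathcal F}_V))$ for $V\in\mathrm{En}(\mathcal F)$. For consistent $\mathbf X=\mathbf x$: $\mathcal F_{\mathbf X=\mathbf x}$ restricts $\mathcal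 F$ to $\mathrm{En}(\mathcal F)\setminus\mathbf X$; $s^{\mathcal F}_{\mathbf X=\mathbf x}$: $X_i\mapsto x_i$, $V\mapsto s(V)$ on $\mathrm{Ex}(\mathcal F)\setminus\mathbf X$, $V\mapsto\mathcal F_V(s^{\mathcal F}_{\mathbf X=\mathbf x}(PA^{\mathcal F}_V))$ on $\mathrm{En}(\mathcal F)\setminus\mathbf X$. Causal team $T=(T^-,\mathcal F)$ ($T^-$ compatible assignments; empty team components identified as $\emptyset$); causal subteams $(S^-,\mathcal F)$, $S^-\subseteq T^-$; $T_{\mathbf X=\mathbf x}=(\{s^{\mathcal F}_{\mathbf X=\mathbf x}:s\in T^-\},\mathcal F_{\mathbf X=\mathbf x})$; $\models^c$: $T\models X=x$ iff $s(X)=x$ for all $s\in T^-$; $T\models{=}(V)$ iff $s(V)=s'(V)$ for all $s,s'\in T^-$; $T\models\neg\alpha$ iff $(\{s\},\mathcal F)\not\models\alpha$ for all $s\in T^-$; $\wedge$ classical; $T\models\varphi\vee\psi$ iff causal subteams $T_1,T_2$ exist with $T_1^-\cup T_2^-=T^-$, $T_1\models\varphi$, $T_2\models\psi$; $T\models\mathbf X=\mathbf x\;\Box\!\!\rightarrow\varphi$ iff $\mathbf X=\mathbf x$ inconsistent or $T_{\mathbf X=\mathbf x}\models\varphi$. Generalized causal team: a set $T$ of compatible pairs $(s,\mathcal F)$, $\mathcal F\in\mathbb F_\sigma$; subteams are subsets; $T^-=\{s:(s,\mathcal F)\in T\}$; $T_{\mathbf X=\mathbf x}=\{(s^{\mathcal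 F}_{\mathbf X=\mathbf x},\mathcal F_{\mathbf X=\mathbf x}):(s,\mathcal F)\in T\}$; $\models^g$: same clauses except $T\models\neg\alpha$ iff $\{(s,\mathcal F)\}\not\models\alpha$ for all $(s,\mathcal F)\in T$, and $T\models\varphi\vee\psi$ iff $T=T_1\cup T_2$ with $T_1\models\varphi$, $T_2\models\psi$. $\mathrm{Cn}(\mathcal F)=\{V\in\mathrm{En}(\mathcal F):\mathcal F_V\text{ constant}\}$; $\mathcal F_V\sim\mathcal G_V$ iff $\mathcal F_V(\mathbf x\mathbf y)=\mathcal G_V(\mathbf x\mathbf z)$ for all $\mathbf x\in\mathrm{Ran}(PA^{\mathcal F}_V\cap PA^{\mathcal G}_V)$, $\mathbf y\in\mathrm{Ran}(PA^{\mathcal F}_V\setminus PA^{\mathcal G}_V)$, $\mathbf z\in\mathrm{Ran}(PA^{\mathcal G}_V\setminus PA^{\mathcal F}_V)$; $\mathcal F\sim\mathcal G$ iff $\mathrm{En}(\mathcal F)\setminus\mathrm{Cn}(\mathcal F)=\mathrm{En}(\mathcal G)\setminus\mathrm{Cn}(\mathcal G)$ and $\mathcal F_V\sim\mathcal G_V$ for each such $V$. Nonempty causal teams: $(T^-,\mathcal F)\approx(S^-,\mathcal G)$ iff $T^-=S^-$, $\mathcal F\sim\mathcal G$. Generalized: $T^{\mathcal F}=\{(s,\mathcal G)\in T:\mathcal G\sim\mathcal F\}$, $S\approx T$ iff $(S^{\mathcal F})^-=(T^{\mathcal F})^-$ for all $\mathcal F$; on pairs $(s,\mathcal F)\approx(t,\mathcal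 G)$ iff $s=t$ and $\mathcal F\sim\mathcal G$, and $T/_{\approx}$ is the set of $\approx$-classes of elements of $T$. $S\preccurlyeq T$ iff $S\approx R$ for some causal subteam $R$ of $T$ ($\emptyset\preccurlyeq T$ always). For a causal team $T=(T^-,\mathcal F)$, $T^g=\{(s,\mathcal F):s\in T^-\}$. Formulas: $\Theta^{A}:=\bigvee_{s\in A}\bigwedge_{V\in\mathrm{Dom}}V=s(V)$ for $A\subseteq\mathbb A_\sigma$. With $\mathbf W_V$ listing $\mathrm{Dom}\setminus\{V\}$: $\Phi^{\mathcal F}:=\bigwedge_{V\in\mathrm{En}(\mathcal F)\setminus\mathrm{Cn}(\mathcal F)}\eta(V)\wedge\bigwedge_{V\notin\mathrm{En}(\mathcal F)\setminus\mathrm{Cn}(\mathcal F)}\xi(V)$, $\eta(V)$ the conjunction of all $(\mathbf W=\mathbf w\wedge PA^{\mathcal F}_V=\mathbf p)\;\Box\!\!\rightarrow V=\mathcal F_V(\mathbf p)$ ($\mathbf W$ listing $\mathrm{Dom}\setminus(PA^{\mathcal F}_V\cup\{V\})$, $\mathbf w\in\mathrm{Ran}(\mathbf W)$, $\mathbf p\in\mathrm{Ran}(PA^{\mathcal F}_V)$), $\xi(V)$ the conjunction of all $V=v\supset(\mathbf W_V=\mathbf w\;\Box\!\!\rightarrow V=v)$. $\chi:=\bigwedge_{V}\bigwedge_{\mathbf w\in\mathrm{Ran}(\mathbf W_V)}(\mathbf W_V=\mathbf w\;\Box\!\!\rightarrow{=}(V))\wedge\bigwedge_V{=}(V)$; $\chi_0:=\bot$,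 $\chi_k:=\chi\vee\dots\vee\chi$ ($k$ disjuncts). For a nonempty generalized causal team $T$ with $|T/_{\approx}|=k+1$: $\Xi^T:=\chi_k\vee\Theta^{\mathbb A_\sigma\setminus T^-}\vee\bigvee\{\Theta^{\{s\}}\wedge\Phi^{\mathcal F}: s\in T^-,\ \mathcal F\in\mathbb F_\sigma,\ \{(s,\mathcal F)\}\not\preccurlyeq T\}$. For a nonempty causal team $T$, $\Xi^T:=\Xi^{T^g}$. *)

(* Defs.v *)
From mathcomp Require Import all_boot.
Set Implicit Arguments.
Unset Strict Implicit.
Unset Printing Implicit Defensive.

Section Signature.
Variables (V : finType) (Ran : V -> finType).

Definition asg : finType := {dffun forall X : V, Ran X}.

(* pairs X = x *)
Definition lit : finType := {X : V & Ran X}.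

(* A function F_V : Ran(PA_V) -> Ran(V) is represented as a function on full
   assignments depending only on the variables of PA_V. *)
Definition fnT (X : V) : finType := {ffun asg -> Ran X}.

(* raw data: parent sets and (optional) functions; None = exogenous *)
Definition rawsys : finType :=
  ({ffun V -> {set V}} * {dffun forall X : V, option (fnT X)})%type.

Definition parent_rel (r : rawsys) : rel V := fun a b => a \in r.1 b.

Definition wf_sys (r : rawsys) : bool :=
  [forall X, (r.2 X == None) ==> (r.1 X == set0)] &&
  [forall X, X \notin r.1 X] &&
  [forall X, match r.2 X with
             | Some f => [forall s : asg, forall t : asg,
                           [forall W in r.1 X, s W == t W] ==> (f s == f t)]
             | None => true end] &&
  (* recursiveness: the parent graph is acyclic *)
  [forall a, forall b, (a \in r.1 b) ==> ~~ connect (parent_rel r) b a].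

Definition system : finType := {r : rawsys | wf_sys r}.

Definition PA (F : system) (X : V) : {set V} := (val F).1 X.
Definition Fn (F : system) (X : V) : option (fnT X) := (val F).2 X.
Definition En (F : system) : {set V} := [set X | Fn F X != None].
Definition Cn (F : system) : {set V} :=
  [set X | match Fn F X with
           | Some f => [forall s : asg, forall t : asg, f s == f t]
           | None => false end].

Definition compatible (s : asg) (F : system) : bool :=
  [forall X, match Fn F X with Some f => s X == f s | None => true end].

Definition consistent (A : seq lit) : bool :=
  all (fun p => all (fun q => (tag p == tag q) ==> (p == q)) A) A.

Definition ivars (A : seq lit) : seq V := [seq tag p | p <- A].

Definition interv_raw (F : system) (A : seq lit) : rawsys :=
  ([ffun Y => if Y \in ivars A then set0 else PA F Y],
   [ffun Y => if Y \in ivars A then None else Fn F Y]).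
Definition intervF (F : system) (A : seq lit) : system :=
  insubd F (interv_raw F A).

(* s^F_{X=x}: the assignment t with t(X_i) = x_i, t(V) = s(V) on Ex(F)\X and
   t(V) = F_V(t(PA_V)) on En(F)\X (unique for recursive F). *)
Definition interv_cond (F : system) (A : seq lit) (s t : asg) : bool :=
  all (fun p => Tagged Ran (t (tag p)) == p) A &&
  [forall Y, (Y \notin ivars A) ==>
     (t Y == match Fn F Y with Some f => f t | None => s Y end)].
Definition interv_s (F : system) (A : seq lit) (s : asg) : asg :=
  odflt s [pick t | interv_cond F A s t].

Inductive form : Type :=
| fEq (X : V) (x : Ran X)
| fDep (X : V)
| fNeg (a : form)
| fAnd (a b : form)
| fOr (a b : form)
| fCf (A : seq lit) (b : form).

Fixpoint sat_c (F : system) (T : {set asg}) (phi : form) : Prop :=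
  match phi with
  | fEq X x => forall s, s \in T -> s X = x
  | fDep X => forall s s', s \in T -> s' \in T -> s X = s' X
  | fNeg a => forall s, s \in T -> ~ sat_c F [set s] a
  | fAnd a b => sat_c F T a /\ sat_c F T b
  | fOr a b => exists T1 T2 : {set asg},
                 T1 :|: T2 = T /\ sat_c F T1 a /\ sat_c F T2 b
  | fCf A b => ~~ consistent A \/
               sat_c (intervF F A) [set interv_s F A s | s in T] b
  end.

Fixpoint sat_g (T : {set (asg * system)}) (phi : form) : Prop :=
  match phi with
  | fEq X x => forall p, p \in T -> p.1 X = x
  | fDep X => forall p p', p \in T -> p' \in T -> p.1 X = p'.1 X
  | fNeg a => forall p, p \in T -> ~ sat_g [set p] a
  | fAnd a b => sat_g T a /\ sat_g T b
  | fOr a b => exists T1 T2 : {set (asg * system)},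
                 T1 :|: T2 = T /\ sat_g T1 a /\ sat_g T2 b
  | fCf A b => ~~ consistent A \/
               sat_g [set (interv_s p.2 A p.1, intervF p.2 A) | p in T] b
  end.

Definition compatible_c (F : system) (T : {set asg}) : bool :=
  [forall s in T, compatible s F].
Definition compatible_g (T : {set (asg * system)}) : bool :=
  [forall p in T, compatible p.1 p.2].

(* F_V ~ G_V, written out for functions on full assignments *)
Definition fn_sim (X : V) (F G : system) : bool :=
  match Fn F X, Fn G X with
  | Some f, Some g =>
      [forall s : asg, forall t : asg, [forall W in PA F X :&: PA G X, s W == t W]
                             ==> (f s == g t)]
  | _, _ => false
  end.

Definition sys_sim (F G : system) : bool :=
  (En F :\: Cn F == En G :\: Cn G) &&
  [forall X in En F :\: Cn F, fn_sim X F G].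

Definition approx_c (T : {set asg} * system) (S : {set asg} * system) : bool :=
  (T.1 != set0) && (S.1 != set0) && (T.1 == S.1) && sys_sim T.2 S.2.

Definition preceq_c (S T : {set asg} * system) : bool :=
  (S.1 == set0) ||
  [exists R : {set asg}, (R \subset T.1) && approx_c S (R, T.2)].

Definition team_dash (T : {set (asg * system)}) : {set asg} :=
  [set p.1 | p in T].
Definition team_restr (T : {set (asg * system)}) (F : system)
  : {set (asg * system)} := [set p in T | sys_sim p.2 F].

Definition approx_g (S T : {set (asg * system)}) : bool :=
  [forall F : system, team_dash (team_restr S F) == team_dash (team_restr T F)].

Definition preceq_g (S T : {set (asg * system)}) : bool :=
  (S == set0) || [exists R : {set (asg * system)}, (R \subset T) && approx_g S R].

Definition approx_pair (p q : asg * system) : bool :=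
  (p.1 == q.1) && sys_sim p.2 q.2.

Definition classes (T : {set (asg * system)}) : {set {set (asg * system)}} :=
  [set [set q | approx_pair p q] | p in T].

Definition team_g (T : {set asg}) (F : system) : {set (asg * system)} :=
  [set (s, F) | s in T].

Section Formulas.
Variables (X0 : V) (x0 : Ran X0).

Definition fBot : form := fAnd (fEq x0) (fNeg (fEq x0)).
Definition fTop : form := fNeg fBot.

Fixpoint bigOr (l : seq form) : form :=
  match l with
  | [::] => fBot
  | [:: a] => a
  | a :: l' => fOr a (bigOr l')
  end.
Fixpoint bigAnd (l : seq form) : form :=
  match l with
  | [::] => fTop
  | [:: a] => a
  | a :: l' => fAnd a (bigAnd l')
  end.

Definition fImp (a b : form) : form := fOr (fNeg a) b.

Definition stateF (s : asg) : form := bigAnd [seq fEq (s X) | X <- enum V].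

Definition Theta (A : {set asg}) : form := bigOr [seq stateF s | s <- enum A].

(* W_X = w, where W_X lists Dom \ {X} and w is read off the assignment t *)
Definition ante (X : V) (t : asg) : seq lit :=
  [seq Tagged Ran (t Y) | Y <- [seq Y <- enum V | Y != X]].

(* eta(X): all (W = w /\ PA_X = p) []-> X = F_X(p); pairs (w,p) range over
   the restrictions of all assignments t to Dom \ {X}. *)
Definition eta (F : system) (X : V) : form :=
  match Fn F X with
  | Some f => bigAnd [seq fCf (ante X t) (fEq (f t)) | t : asg <- enum asg]
  | None => fTop
  end.

(* xi(X): all X = v -> (W_X = w []-> X = v); (v,w) <-> assignments t *)
Definition xi (X : V) : form :=
  bigAnd [seq fImp (fEq (t X)) (fCf (ante X t) (fEq (t X))) | t : asg <- enum asg].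

Definition Phi (F : system) : form :=
  bigAnd [seq (if X \in En F :\: Cn F then eta F X else xi X) | X <- enum V].

Definition chi : form :=
  fAnd (bigAnd [seq fCf (ante X t) (fDep X) | X <- enum V, t <- enum asg])
       (bigAnd [seq fDep X | X <- enum V]).

Fixpoint chik (k : nat) : form :=
  match k with
  | 0 => fBot
  | 1 => chi
  | k'.+1 => fOr chi (chik k')
  end.

(* Xi^T for a nonempty generalized causal team T with |T/~~| = k+1 *)
Definition Xi_g (T : {set (asg * system)}) : form :=
  fOr (fOr (chik (#|classes T| - 1)) (Theta (~: team_dash T)))
      (bigOr [seq fAnd (Theta [set p.1]) (Phi p.2)
             | p <- enum [set p : asg * system |
                           (p.1 \in team_dash T) && ~~ preceq_g [set p] T]]).

Definition Xi_c (T : {set asg}) (F : system) : form := Xi_g (team_g T F).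

End Formulas.
End Signature.

(* Main.v *)
From Stdlib Require Import ClassicalDescription Classical.
Require Import Defs.
From mathcomp Require Import all_boot zify.
Unset Implicit Arguments.
Unset Strict Implicit.
Unset Printing Implicit Defensive.

Section Aux.
Variables (V : finType) (Ran : V -> finType).
Local Notation asg := (asg Ran).
Local Notation system := (system Ran).
Local Notation form := (form Ran).

Definition pb (P : Prop) : bool := if excluded_middle_informative P then true else false.
Lemma pbP (P : Prop) : reflect P (pb P).
Proof. by rewrite /pb; case: excluded_middle_informative => h; constructor. Qed.

Lemma PA_noself (F : system) X : X \notin PA F X.
Proof.
move: (valP F); rewrite /wf_sys => /andP[/andP[/andP[_ h2] _] _].
exact: (forallP h2 X).
Qed.

Lemma PA_neq (F : system) X W : W \in PA F X -> W != X.
Proof. by apply: contraTneq => ->; apply: PA_noself. Qed.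

Lemma Fn_dep {F : system} {X} {f : fnT Ran X} : Fn F X = Some f ->
  forall s t : asg, (forall W, W \in PA F X -> s W = t W) -> f s = f t.
Proof.
move=> Hf s t Hst.
move: (valP F); rewrite /wf_sys => /andP[/andP[/andP[_ _] h3] _].
move: (forallP h3 X); rewrite -/(Fn F X) Hf => /forallP /(_ s) /forallP /(_ t) /implyP H.
apply/eqP; apply: H; apply/forall_inP => W HW; apply/eqP; exact: Hst.
Qed.

Lemma compatP {s : asg} {F : system} {X} {f : fnT Ran X} : compatible s F -> Fn F X = Some f -> s X = f s.
Proof. move=> /forallP /(_ X) H Hf; move: H; rewrite /Fn in Hf *; by rewrite Hf => /eqP. Qed.

Definition upd (t : asg) (X : V) (v : Ran X) : asg :=
  finfun (fun Y : V => tagged_as (Tagged Ran (t Y)) (Tagged Ran v)).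



Lemma upd_same (t : asg) (X : V) (v : Ran X) : upd t X v X = v.
Proof. by rewrite /upd ffunE tagged_asE. Qed.

Lemma upd_other (t : asg) (X : V) (v : Ran X) (Y : V) : Y != X -> upd t X v Y = t Y.
Proof.
move=> hYX; rewrite /upd ffunE /tagged_as /=.
case: eqP => // e; by rewrite e eqxx in hYX.
Qed.

Definition mix (P : {set V}) (a b : asg) : asg :=
  finfun (fun W : V => if W \in P then a W else b W).

Lemma mixE (P : {set V}) (a b : asg) (W : V) : mix P a b W = if W \in P then a W else b W.
Proof. by rewrite /mix ffunE. Qed.

Definition vals (F : system) (s : asg) (X : V) (t : asg) : Ran X :=
  match Fn F X with Some f => f t | None => s X end.

Lemma ivars_ante (X : V) (t : asg) : ivars (ante X t) = [seq Y <- enum V | Y != X].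
Proof. rewrite /ivars /ante; elim: [seq _ <- _ | _] => //= a l ->; done. Qed.

Lemma mem_ivars_ante (X : V) (t : asg) (Y : V) : (Y \in ivars (ante X t)) = (Y != X).
Proof. by rewrite ivars_ante mem_filter mem_enum andbT. Qed.

Lemma cons_ante (X : V) (t : asg) : consistent (ante X t).
Proof.
apply/allP => p /mapP [Y _ ->]; apply/allP => q /mapP [Z _ ->] /=.
by apply/implyP => /eqP E; subst Z.
Qed.

Lemma interv_val (F : system) (s t : asg) X :
  interv_s F (ante X t) s X = vals F s X t.
Proof.
set v := vals F s X t.
have Hc : interv_cond F (ante X t) s (upd t X v).
  apply/andP; split.
    apply/allP => p /mapP [Y]; rewrite mem_filter => /andP [hY _] -> /=.
    by rewrite upd_other.
  apply/forallP => Y; apply/implyP; rewrite mem_ivars_ante negbK => /eqP ->.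
  rewrite upd_same /v /vals; case E: (Fn F X) => [f|] //.
  apply/eqP; apply: (Fn_dep E) => W HW; rewrite upd_other //.
  exact: PA_neq HW.
rewrite /interv_s; case: pickP => [t'' Hc'|H]; last by have := H (upd t X v); rewrite Hc.
move/andP: Hc' => [H1 /forallP /(_ X)]; rewrite mem_ivars_ante eqxx /= => /eqP ->.
rewrite /v /vals; case E: (Fn F X) => [f|] //=.
apply: (Fn_dep E) => W HW.
have hWX : W != X by exact: PA_neq HW.
move/allP: H1 => /(_ (Tagged Ran (t W))).
have -> : Tagged Ran (t W) \in ante X t.
  by apply/mapP; exists W => //; rewrite mem_filter hWX mem_enum.
by move=> /(_ isT) /=; rewrite eq_Tagged => /eqP.
Qed.

Lemma In_map (A B : Type) (f : A -> B) (l : seq A) y :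
  List.In y (map f l) <-> exists x, List.In x l /\ y = f x.
Proof.
elim: l => [|a l IH] /=; first by split=> // [[x []]].
split.
  case=> [<-|/IH [x [h1 h2]]]; first by exists a; auto.
  by exists x; auto.
by case=> x [[<-|h1] h2]; [left | right; apply/IH; exists x].
Qed.

Lemma In_map_in {A B : Type} {f : A -> B} {l : seq A} {x} : List.In x l -> List.In (f x) (map f l).
Proof. by move=> h; apply/In_map; exists x. Qed.

Lemma In_cat (A : Type) (l1 l2 : seq A) y : List.In y (l1 ++ l2) <-> List.In y l1 \/ List.In y l2.
Proof. elim: l1 => [|a l IH] /=; [tauto | rewrite IH; tauto]. Qed.

Lemma In_flatten (A : Type) (L : seq (seq A)) y :
  List.In y (flatten L) <-> exists l, List.In l L /\ List.In y l.
Proof.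
elim: L => [|l L IH] /=; first by split=> // [[x []]].
rewrite In_cat IH; split.
  by case=> [h|[l' [h1 h2]]]; [exists l; auto | exists l'; auto].
by case=> l' [[<-|h1] h2]; [left | right; exists l'].
Qed.

Lemma In_mem (T : eqType) (x : T) (s : seq T) : List.In x s <-> x \in s.
Proof.
elim: s => [|a s IH] //=; rewrite in_cons IH; split.
  by case=> [->|->]; rewrite ?eqxx ?orbT.
by case/orP => [/eqP ->|]; auto.
Qed.

Lemma In_enum (T : finType) (x : T) : List.In x (enum T).
Proof. by apply/In_mem; rewrite mem_enum. Qed.

Variables (X0 : V) (x0 : Ran X0).
Local Notation team := {set (asg * system)}.

Definition flat (phi : form) := forall U : team, sat_g U phi <-> (forall p, p \in U -> sat_g [set p] phi).

Lemma flat0 phi : flat phi -> sat_g set0 phi.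
Proof. by move=> h; apply/h => p; rewrite in_set0. Qed.

Lemma sat_bot (U : team) : sat_g U (fBot x0) <-> U = set0.
Proof.
split.
  move=> [h1 h2]; apply/setP => p; rewrite in_set0; apply/negP => hp.
  by apply: (h2 p hp) => q; rewrite in_set1 => /eqP ->; apply: h1.
by move=> ->; split=> p; rewrite in_set0.
Qed.

Lemma sat_top (U : team) : sat_g U (fTop x0).
Proof. by move=> p hp /sat_bot /setP /(_ p); rewrite in_set1 in_set0 eqxx. Qed.

Lemma flat_Eq X (x : Ran X) : flat (fEq x).
Proof.
move=> U /=; split; first by move=> h p hp q; rewrite in_set1 => /eqP ->; apply: h.
by move=> h p hp; apply: (h p hp); rewrite in_set1.
Qed.

Lemma flat_Neg a : flat (fNeg a).
Proof.
move=> U /=; split; first by move=> h p hp q; rewrite in_set1 => /eqP ->; apply: h.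
by move=> h p hp; apply: (h p hp); rewrite in_set1.
Qed.

Lemma flat_And a b : flat a -> flat b -> flat (fAnd a b).
Proof.
move=> ha hb U /=; rewrite (ha U) (hb U); split.
  move=> [h1 h2] p hp; split; [apply/(ha _).2 | apply/(hb _).2] => q; rewrite in_set1 => /eqP ->; auto.
move=> h; split=> p hp; have [h1 h2] := h p hp.
  by apply: ((ha _).1 h1); rewrite in_set1.
by apply: ((hb _).1 h2); rewrite in_set1.
Qed.

Lemma sat_Or_flat a b (U : team) : flat a -> flat b ->
  sat_g U (fOr a b) <-> (forall p, p \in U -> sat_g [set p] a \/ sat_g [set p] b).
Proof.
move=> ha hb /=; split.
  move=> [U1 [U2 [<- [h1 h2]]]] p; rewrite in_setU => /orP [hp|hp].
    by left; move/ha: h1; apply.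
  by right; move/hb: h2; apply.
move=> h; exists [set p in U | pb (sat_g [set p] a)], [set p in U | pb (sat_g [set p] b)].
split; last split.
- apply/setP => p; rewrite in_setU !inE -andb_orr; case hp: (p \in U) => //=.
  by case: (h p hp) => [/pbP -> | /pbP ->]; rewrite ?orbT.
- by apply/ha => p; rewrite inE => /andP [_ /pbP].
- by apply/hb => p; rewrite inE => /andP [_ /pbP].
Qed.

Lemma flat_Or a b : flat a -> flat b -> flat (fOr a b).
Proof.
move=> ha hb U; rewrite sat_Or_flat //; split.
  move=> h p hp; apply/sat_Or_flat => // q; rewrite in_set1 => /eqP ->; auto.
move=> h p hp; move/sat_Or_flat: (h p hp) => /(_ ha hb p); rewrite in_set1 eqxx; auto.
Qed.

Lemma flat_Cf A b : flat b -> flat (fCf A b).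
Proof.
move=> hb U /=; case: (boolP (consistent A)) => hc /=.
  split.
    move=> [//|h] p hp; right; rewrite imset_set1; move/hb: h; apply.
    by apply/imsetP; exists p.
  move=> h; right; apply/hb => r /imsetP [p hp ->].
  by case: (h p hp) => //; rewrite imset_set1.
by split=> *; left.
Qed.

Lemma sat_bigAnd (U : team) l : sat_g U (bigAnd x0 l) <-> (forall phi, List.In phi l -> sat_g U phi).
Proof.
elim: l => [|a l IH]; first by split=> // _; apply: sat_top.
case: l IH => [|b l] IH.
  by split; [move=> h phi [<-|[]] | move=> h; apply: h; left].
have -> : bigAnd x0 [:: a, b & l] = fAnd a (bigAnd x0 (b :: l)) by [].
rewrite [sat_g _ (fAnd _ _)]/= IH; split.
  by move=> [h1 h2] phi [<-|hin]; [|apply: h2].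
by move=> h; split; [apply: h; left | move=> phi hin; apply: h; right].
Qed.

Lemma flat_bigAnd l : (forall phi, List.In phi l -> flat phi) -> flat (bigAnd x0 l).
Proof.
move=> hl U; rewrite sat_bigAnd; split.
  by move=> h p hp; apply/sat_bigAnd => phi hin; move/(hl phi hin): (h phi hin); apply.
move=> h phi hin; apply/(hl phi hin) => p hp.
by move/sat_bigAnd: (h p hp); apply.
Qed.

Lemma flat_bot : flat (fBot x0).
Proof. by apply: flat_And; [apply: flat_Eq | apply: flat_Neg]. Qed.

Lemma flat_top : flat (fTop x0).
Proof. exact: flat_Neg. Qed.

Lemma flat_bigOr l : (forall phi, List.In phi l -> flat phi) ->
  flat (bigOr x0 l) /\
  (forall p, sat_g [set p] (bigOr x0 l) <-> exists phi, List.In phi l /\ sat_g [set p] phi).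
Proof.
elim: l => [|a l IH] hl.
  split; first exact: flat_bot.
  move=> p; rewrite sat_bot; split; last by case=> ? [[]].
  by move/setP/(_ p); rewrite in_set1 in_set0 eqxx.
have ha : flat a by apply: hl; left.
have [hf hs] := IH (fun phi h => hl phi (or_intror h)).
case: l IH hl hf hs => [|b l] IH hl hf hs.
  by split=> // p; split; [move=> h; exists a; split=> //; left | case=> phi [[<-|[]]]].
split; first exact: flat_Or.
move=> p; have -> : bigOr x0 [:: a, b & l] = fOr a (bigOr x0 (b :: l)) by [].
rewrite sat_Or_flat //; split.
  move/(_ p); rewrite in_set1 eqxx => /(_ isT) [h|/hs [phi [hin h]]]; first by exists a; split=> //; left.
  by exists phi; split=> //; right.
move=> [phi [[<-|hin] h]] q; rewrite in_set1 => /eqP ->; first by left.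
by right; apply/hs; exists phi.
Qed.

Lemma sat_bigOr l (U : team) : (forall phi, List.In phi l -> flat phi) ->
  sat_g U (bigOr x0 l) <-> (forall p, p \in U -> exists phi, List.In phi l /\ sat_g [set p] phi).
Proof.
move=> hl; have [hf hs] := flat_bigOr l hl; rewrite hf; split=> h p hp; apply/hs; exact: h.
Qed.


Lemma inEC (F : system) X :
  X \in En F :\: Cn F <-> exists f, Fn F X = Some f /\ exists t1 t2, f t1 != f t2.
Proof.
rewrite !inE; case E: (Fn F X) => [f|] /=; rewrite ?andbT.
  split.
    move=> h; exists f; split=> //; move: h; rewrite negb_forall => /existsP [t1].
    by rewrite negb_forall => /existsP [t2 h]; exists t1, t2.
  move=> [g [[<-] [t1 [t2 h]]]]; apply/negP => /forallP /(_ t1) /forallP /(_ t2).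
  by rewrite (negbTE h).
by split=> // [[f [] //]].
Qed.

Lemma vals_out (F : system) (s : asg) X t : compatible s F -> X \notin En F :\: Cn F -> vals F s X t = s X.
Proof.
move=> hc hX; rewrite /vals; case E: (Fn F X) => [f|] //.
rewrite (compatP hc E); apply/eqP; apply: contraR hX => hne; apply/inEC; exists f; split=> //.
by exists t, s.
Qed.

Lemma fn_simP (F G : system) X : fn_sim X F G <-> exists f g, Fn F X = Some f /\ Fn G X = Some g /\
  forall a b : asg, (forall W, W \in PA F X -> W \in PA G X -> a W = b W) -> f a = g b.
Proof.
rewrite /fn_sim; case E1: (Fn F X) => [f|]; last by split=> // [[f [g [] //]]].
case E2: (Fn G X) => [g|]; last by split=> // [[f' [g' [_ [] //]]]].
split.
  move=> h; exists f, g; do 2 split=> //; move=> a b hab.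
  move/forallP: h => /(_ a) /forallP /(_ b) /implyP h; apply/eqP; apply: h.
  by apply/forall_inP => W; rewrite inE => /andP [h1 h2]; rewrite hab.
move=> [f' [g' [[<-] [[<-] h]]]]; apply/forallP => a; apply/forallP => b; apply/implyP => hab.
apply/eqP; apply: h => W h1 h2; apply/eqP; move/forall_inP: hab; apply; by rewrite inE h1 h2.
Qed.

Lemma fn_sim_of_eq {F G : system} {X} {f g : fnT Ran X} : Fn F X = Some f -> Fn G X = Some g ->
  (forall t, f t = g t) -> fn_sim X F G.
Proof.
move=> E1 E2 h; apply/fn_simP; exists f, g; do 2 split=> //; move=> a b hab.
rewrite (Fn_dep E1 a (mix (PA F X) a b)); last by move=> W hW; rewrite mixE hW.
rewrite h; apply: (Fn_dep E2) => W hW; rewrite mixE; case: ifP => // hF; exact: hab.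
Qed.

Lemma fn_sim_eq {F G : system} {X} {f g : fnT Ran X} : fn_sim X F G -> Fn F X = Some f -> Fn G X = Some g ->
  forall t, f t = g t.
Proof.
move=> /fn_simP [f' [g' [E1 [E2 h]]]] E1' E2' t.
by move: E1 E2; rewrite E1' E2' => [[e1] [e2]]; subst f' g'; apply: h.
Qed.

Lemma fn_sim_refl (F : system) X : X \in En F -> fn_sim X F F.
Proof.
rewrite inE; case E: (Fn F X) => [f|] // _.
by apply: (fn_sim_of_eq E E).
Qed.

Lemma fn_sim_sym {F G : system} {X} : fn_sim X F G -> fn_sim X G F.
Proof.
move=> /fn_simP [f [g [E1 [E2 h]]]]; apply/fn_simP; exists g, f; do 2 split=> //.
move=> a b hab; symmetry; apply: h => W h1 h2; symmetry; exact: hab.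
Qed.

Lemma fn_sim_trans {F G H : system} {X} : fn_sim X F G -> fn_sim X G H -> fn_sim X F H.
Proof.
move=> h1 h2; have := h1; move=> /fn_simP [f [g [E1 [E2 _]]]].
have := h2; move=> /fn_simP [g' [h [E2' [E3 _]]]].
apply: (fn_sim_of_eq E1 E3) => t.
by rewrite (fn_sim_eq h1 E1 E2) (fn_sim_eq h2 E2 E3).
Qed.

Lemma sys_simP (F G : system) : sys_sim F G <->
  (En F :\: Cn F = En G :\: Cn G /\ forall X, X \in En F :\: Cn F -> fn_sim X F G).
Proof.
rewrite /sys_sim; split.
  by move=> /andP [/eqP h1 /forall_inP h2].
by move=> [h1 h2]; apply/andP; split; [apply/eqP | apply/forall_inP].
Qed.

Lemma sys_sim_refl (F : system) : sys_sim F F.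
Proof.
apply/sys_simP; split=> // X; rewrite inE => /andP [_ h]; exact: fn_sim_refl.
Qed.

Lemma sys_sim_sym {F G : system} : sys_sim F G -> sys_sim G F.
Proof.
move=> /sys_simP [h1 h2]; apply/sys_simP; split=> // X; rewrite -h1 => hX.
exact: fn_sim_sym (h2 X hX).
Qed.

Lemma sys_sim_trans {F G H : system} : sys_sim F G -> sys_sim G H -> sys_sim F H.
Proof.
move=> /sys_simP [h1 h2] /sys_simP [h3 h4]; apply/sys_simP; split; first by rewrite h1.
move=> X hX; apply: (fn_sim_trans (h2 X hX)); apply: h4; by rewrite -h1.
Qed.

Lemma approx_refl (p : asg * system) : approx_pair p p.
Proof. by rewrite /approx_pair eqxx sys_sim_refl. Qed.

Lemma approx_sym {p q : asg * system} : approx_pair p q -> approx_pair q p.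
Proof. case: p q => [s F] [t G]; rewrite /approx_pair /= => /andP [/eqP -> h]; by rewrite eqxx sys_sim_sym. Qed.

Lemma approx_trans {p q r : asg * system} : approx_pair p q -> approx_pair q r -> approx_pair p r.
Proof.
case: p q r => [s F] [t G] [u H]; rewrite /approx_pair /= => /andP [/eqP -> h1] /andP [/eqP -> h2]; rewrite eqxx /=.
exact: sys_sim_trans h1 h2.
Qed.


Lemma sat_eq1 (p : asg * system) X (v : Ran X) : sat_g [set p] (fEq v) <-> p.1 X = v.
Proof. by split=> [h | h q]; [apply: h; rewrite in_set1 | rewrite in_set1 => /eqP ->]. Qed.

Lemma sat_neg1 (p : asg * system) a : sat_g [set p] (fNeg a) <-> ~ sat_g [set p] a.
Proof. by split=> [h | h q]; [apply: h; rewrite in_set1 | rewrite in_set1 => /eqP ->]. Qed.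

Lemma sat_cf_eq1 (p : asg * system) X (t : asg) (v : Ran X) :
  sat_g [set p] (fCf (ante X t) (fEq v)) <-> vals p.2 p.1 X t = v.
Proof.
rewrite /= cons_ante imset_set1 /=; split.
  by case=> // /sat_eq1 /=; rewrite interv_val.
by move=> h; right; apply/sat_eq1; rewrite /= interv_val.
Qed.

Lemma flat_stateF s : flat (stateF x0 s).
Proof. apply: flat_bigAnd => phi /In_map [X [_ ->]]; exact: flat_Eq. Qed.

Lemma sat_stateF1 (p : asg * system) s : sat_g [set p] (stateF x0 s) <-> p.1 = s.
Proof.
rewrite /stateF sat_bigAnd; split.
  move=> h; apply/ffunP => X; apply/sat_eq1; apply: h; apply/In_map; exists X; split=> //.
  exact: In_enum.
by move=> h phi /In_map [X [_ ->]]; apply/sat_eq1; rewrite h.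
Qed.

Lemma flat_Theta A : flat (Theta x0 A).
Proof.
have := @flat_bigOr [seq stateF x0 s | s <- enum A]; case.
  by move=> phi /In_map [s [_ ->]]; apply: flat_stateF.
by [].
Qed.

Lemma sat_Theta1 (p : asg * system) A : sat_g [set p] (Theta x0 A) <-> p.1 \in A.
Proof.
have hfl : forall phi, List.In phi [seq stateF x0 s | s <- enum A] -> flat phi.
  by move=> phi /In_map [s [_ ->]]; apply: flat_stateF.
have [_ ->] := flat_bigOr _ hfl.
split.
  by move=> [phi [/In_map [s [hs ->]]]] /sat_stateF1 ->; move/In_mem: hs; rewrite mem_enum.
move=> h; exists (stateF x0 p.1); split; last by apply/sat_stateF1.
by apply/In_map; exists p.1; split=> //; apply/In_mem; rewrite mem_enum.
Qed.

Lemma sat_Theta (U : team) A : sat_g U (Theta x0 A) <-> forall p, p \in U -> p.1 \in A.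
Proof. rewrite flat_Theta; split=> h p hp; apply/sat_Theta1; exact: h. Qed.

Lemma flat_eta F X : flat (eta x0 F X).
Proof.
rewrite /eta; case: (Fn F X) => [f|]; last exact: flat_top.
apply: flat_bigAnd => phi /In_map [t [_ ->]]; apply: flat_Cf; exact: flat_Eq.
Qed.

Lemma sat_eta1 {p : asg * system} {F : system} {X} {f : fnT Ran X} : Fn F X = Some f ->
  sat_g [set p] (eta x0 F X) <-> forall t, vals p.2 p.1 X t = f t.
Proof.
move=> E; rewrite /eta E sat_bigAnd; split.
  move=> h t; apply/sat_cf_eq1; apply: h; apply/In_map; exists t; split=> //; exact: In_enum.
by move=> h phi /In_map [t [_ ->]]; apply/sat_cf_eq1.
Qed.

Lemma flat_xi X : flat (xi x0 X).
Proof.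
apply: flat_bigAnd => phi /In_map [t [_ ->]]; apply: flat_Or; first exact: flat_Neg.
apply: flat_Cf; exact: flat_Eq.
Qed.

Lemma sat_xi1 (p : asg * system) X :
  sat_g [set p] (xi x0 X) <-> forall t : asg, t X = p.1 X -> vals p.2 p.1 X t = t X.
Proof.
rewrite /xi sat_bigAnd; split.
  move=> h t ht; have := h _ (In_map_in (In_enum _ t)).
  rewrite /fImp sat_Or_flat; [|exact: flat_Neg | apply: flat_Cf; exact: flat_Eq].
  move/(_ p); rewrite in_set1 eqxx => /(_ isT) [/sat_neg1 h1|/sat_cf_eq1 //].
  by exfalso; apply: h1; apply/sat_eq1.
move=> h phi /In_map [t [_ ->]].
rewrite /fImp sat_Or_flat; [|exact: flat_Neg | apply: flat_Cf; exact: flat_Eq].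
move=> q; rewrite in_set1 => /eqP ->.
case: (eqVneq (t X) (p.1 X)) => e.
  by right; apply/sat_cf_eq1; apply: h.
by left; apply/sat_neg1 => /sat_eq1 e'; rewrite e' eqxx in e.
Qed.

Lemma flat_Phi F : flat (Phi x0 F).
Proof.
apply: flat_bigAnd => phi /In_map [X [_ ->]]; case: ifP => _; [exact: flat_eta | exact: flat_xi].
Qed.

Lemma sat_Phi1 (s : asg) (G F : system) : compatible s G ->
  sat_g [set (s, G)] (Phi x0 F) <-> sys_sim G F.
Proof.
move=> hc.
have step : sat_g [set (s, G)] (Phi x0 F) <-> forall X,
   (X \in En F :\: Cn F -> forall f, Fn F X = Some f -> forall t, vals G s X t = f t) /\
   (X \notin En F :\: Cn F -> forall t : asg, t X = s X -> vals G s X t = t X).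
  rewrite /Phi sat_bigAnd; split.
    move=> h X; have := h _ (In_map_in (In_enum _ X)).
    case: ifP => hX hs; split=> // _.
      by move=> f E; move/(sat_eta1 E): hs.
    by move/sat_xi1: hs.
  move=> h phi /In_map [X [_ ->]]; have [h1 h2] := h X; case: ifP => hX.
    by have [f [E _]] := proj1 (inEC F X) hX; apply/(sat_eta1 E); apply: h1.
  by apply/sat_xi1; apply: h2; rewrite hX.
rewrite step; split.
  move=> h.
  have hset : En G :\: Cn G = En F :\: Cn F.
    apply/setP => X; apply/idP/idP => hX.
      apply/negPn/negP => hF; have [_ h2] := h X.
      have [g [E [t1 [t2 hne]]]] := proj1 (inEC G X) hX.
      have [t' ht'] : exists t', g t' != s X.
        case: (eqVneq (g t1) (s X)) => e1; last by exists t1.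
        by exists t2; rewrite -e1 eq_sym.
      have := h2 hF (upd t' X (s X)); rewrite upd_same /vals E => /(_ erefl).
      rewrite (Fn_dep E _ t'); first by move=> e; rewrite e eqxx in ht'.
      by move=> W hW; rewrite upd_other //; exact: PA_neq hW.
    have [f [E [t1 [t2 hne]]]] := proj1 (inEC F X) hX.
    have [h1 _] := h X; have := h1 hX f E; rewrite /vals.
    case E': (Fn G X) => [g|] ht.
      by apply/inEC; exists g; split=> //; exists t1, t2; rewrite !ht.
    by move: hne; rewrite -!ht eqxx.
  apply/sys_simP; split=> // X hX.
  have [g [E _]] := proj1 (inEC G X) hX.
  rewrite hset in hX; have [f [E' _]] := proj1 (inEC F X) hX.
  apply: (fn_sim_of_eq E E') => t; have [h1 _] := h X.
  by rewrite -(h1 hX f E' t) /vals E.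
move=> /sys_simP [hset hsim] X; split.
  move=> hX f E t; rewrite -hset in hX.
  have [g [E' _]] := proj1 (inEC G X) hX.
  by rewrite /vals E'; apply: (fn_sim_eq (hsim X hX) E' E).
move=> hX t ht; rewrite -hset in hX; by rewrite vals_out.
Qed.


Lemma key1 {s : asg} {F G : system} : compatible s F -> compatible s G ->
  (forall X t, vals F s X t = vals G s X t) <-> sys_sim F G.
Proof.
move=> hF hG; split.
  move=> h.
  have hset : En F :\: Cn F = En G :\: Cn G.
    apply/setP => X; apply/idP/idP => hX.
      have [f [E [t1 [t2 hne]]]] := proj1 (inEC F X) hX.
      have := h X; rewrite /vals E; case E': (Fn G X) => [g|] ht.
        by apply/inEC; exists g; split=> //; exists t1, t2; rewrite -!ht.
      by move: hne; rewrite !ht eqxx.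
    have [g [E [t1 [t2 hne]]]] := proj1 (inEC G X) hX.
    have := h X; rewrite /vals E; case E': (Fn F X) => [f|] ht.
      by apply/inEC; exists f; split=> //; exists t1, t2; rewrite !ht.
    by move: hne; rewrite -!ht eqxx.
  apply/sys_simP; split=> // X hX.
  have [f [E _]] := proj1 (inEC F X) hX.
  rewrite hset in hX; have [g [E' _]] := proj1 (inEC G X) hX.
  apply: (fn_sim_of_eq E E') => t; have := h X t; by rewrite /vals E E'.
move=> /sys_simP [hset hsim] X t.
case: (boolP (X \in En F :\: Cn F)) => hX.
  have [f [E _]] := proj1 (inEC F X) hX.
  have hX' := hX; rewrite hset in hX'; have [g [E' _]] := proj1 (inEC G X) hX'.
  by rewrite /vals E E'; apply: (fn_sim_eq (hsim X hX) E E').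
by rewrite !vals_out // -hset.
Qed.

Definition compat_team (U : team) := forall p, p \in U -> compatible p.1 p.2.

Lemma sat_cf_dep (U : team) (X : V) (t : asg) : sat_g U (fCf (ante X t) (fDep Ran X)) <->
  forall p q, p \in U -> q \in U -> vals p.2 p.1 X t = vals q.2 q.1 X t.
Proof.
rewrite /= cons_ante /=; split.
  case=> // h p q hp hq; rewrite -!interv_val.
  exact: (h _ _ (imset_f _ hp) (imset_f _ hq)).
move=> h; right => r r' /imsetP [p hp ->] /imsetP [q hq ->] /=.
by rewrite !interv_val; apply: h.
Qed.

Lemma sat_chi (U : team) : compat_team U ->
  sat_g U (chi x0) <-> forall p q, p \in U -> q \in U -> approx_pair p q.
Proof.
move=> hc; rewrite /chi /= !sat_bigAnd.
have L1in : forall X t, List.In (fCf (ante X t) (fDep Ran X))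
   (flatten [seq [seq fCf (ante X t) (fDep Ran X) | t <- enum asg] | X <- enum V]).
  move=> X t; apply/In_flatten; eexists; split; first exact: (In_map_in (In_enum _ X)).
  exact: (In_map_in (In_enum _ t)).
split.
  move=> [h1 h2] [s F] [s' G] hp hq.
  have es : s = s'.
    apply/ffunP => X; have := h2 (fDep Ran X) (In_map_in (In_enum _ X)).
    by move=> /(_ _ _ hp hq).
  subst s'; rewrite /approx_pair eqxx /=.
  apply/(key1 (hc _ hp) (hc _ hq)).
  by move=> X t; have /sat_cf_dep := h1 _ (L1in X t); move=> /(_ _ _ hp hq).
move=> h; split.
  move=> phi /In_flatten [l [/In_map [X [_ ->]] /In_map [t [_ ->]]]].
  apply/sat_cf_dep => [[s F] [s' G]] hp hq /=.
  have /andP [/eqP /= es hs] := h _ _ hp hq; subst s'.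
  by move: hs; move/(key1 (hc _ hp) (hc _ hq)); apply.
move=> phi /In_map [X [_ ->]] p q hp hq.
by have /andP [/eqP -> _] := h _ _ hp hq.
Qed.


Definition cl (p : asg * system) : {set asg * system} := [set q | approx_pair p q].

Lemma classesE (U : team) : classes U = cl @: U.
Proof. by []. Qed.

Lemma cl_eq {p q} : approx_pair p q -> cl p = cl q.
Proof.
move=> h; apply/setP => r; rewrite !inE; apply/idP/idP => h'.
  exact: approx_trans (approx_sym h) h'.
exact: approx_trans h h'.
Qed.

Lemma cl_eqP {p q} : cl p = cl q -> approx_pair p q.
Proof. move=> e; have : q \in cl q by rewrite inE; apply: approx_refl.
by rewrite -e inE. Qed.

Lemma sat_chi_card (U : team) : compat_team U -> sat_g U (chi x0) <-> #|classes U| <= 1.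
Proof.
move=> hc; rewrite sat_chi //; split.
  move=> h; case: (set_0Vmem U) => [->|[p hp]]; first by rewrite classesE imset0 cards0.
  rewrite -(cards1 (cl p)); apply: subset_leq_card; apply/subsetP => c.
  rewrite classesE => /imsetP [q hq ->]; rewrite in_set1; apply/eqP; apply: cl_eq.
  exact: h.
move=> /card_le1_eqP h p q hp hq; apply: cl_eqP; symmetry.
by apply: h; rewrite classesE; apply: imset_f.
Qed.

Lemma compat_sub {U U' : team} : U' \subset U -> compat_team U -> compat_team U'.
Proof. by move=> /subsetP hs hc p hp; apply: hc; apply: hs. Qed.

Lemma chik_card k : forall U : team, compat_team U -> sat_g U (chik x0 k) <-> #|classes U| <= k.
Proof.
elim: k => [|k IH] U hc.
  have -> : chik x0 0 = fBot x0 by []. rewrite sat_bot leqn0 cards_eq0 classesE imset_eq0; split; [by move=> ->|by move/eqP].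
case: k IH => [|k] IH; first exact: sat_chi_card.
have -> : chik x0 k.+2 = fOr (chi x0) (chik x0 k.+1) by [].
split.
  move=> [U1 [U2 [hU [h1 h2]]]].
  have hc1 : compat_team U1 by apply: compat_sub hc; rewrite -hU subsetUl.
  have hc2 : compat_team U2 by apply: compat_sub hc; rewrite -hU subsetUr.
  move/(sat_chi_card _ hc1): h1 => h1; move/(IH _ hc2): h2 => h2.
  rewrite -hU classesE imsetU -!classesE cardsU.
  by apply: leq_trans (leq_subr _ _) _; rewrite -add1n leq_add.
move=> hk; case: (set_0Vmem U) => [->|[p hp]].
  exists set0, set0; split; first by rewrite setU0.
  split; first by apply/sat_chi_card => [q|]; rewrite ?in_set0 // classesE imset0 cards0.
  by apply/IH => [q|]; rewrite ?in_set0 // classesE imset0 cards0.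
exists [set q in U | approx_pair p q], [set q in U | ~~ approx_pair p q].
split.
  by apply/setP => q; rewrite !inE -andb_orr orbN andbT.
split.
  apply/sat_chi; first by apply: compat_sub hc; apply/subsetP => q; rewrite inE => /andP [].
  move=> q r; rewrite !inE => /andP [_ h1] /andP [_ h2].
  exact: approx_trans (approx_sym h1) h2.
apply/IH; first by apply: compat_sub hc; apply/subsetP => q; rewrite inE => /andP [].
have hpc : cl p \in classes U by rewrite classesE imset_f.
have : classes [set q in U | ~~ approx_pair p q] \subset classes U :\ cl p.
  apply/subsetP => c; rewrite !classesE => /imsetP [q]; rewrite inE => /andP [hq hn] ->.
  rewrite in_setD1 imset_f // andbT; apply/eqP => e; move/negP: hn; apply.
  exact: approx_sym (cl_eqP e).
move/subset_leq_card => hle; apply: leq_trans hle _.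
by move: hk; rewrite (cardsD1 (cl p) (classes U)) hpc add1n ltnS.
Qed.

Lemma preceqP (T S : team) : preceq_g T S <-> forall p, p \in T -> exists q, q \in S /\ approx_pair p q.
Proof.
rewrite /preceq_g; split.
  case/orP => [/eqP -> p|/existsP [R /andP [hRS /forallP hR]]]; first by rewrite in_set0.
  move=> [s F] hp.
  have : s \in team_dash (team_restr T F).
    by apply/imsetP; exists (s, F) => //; rewrite inE hp sys_sim_refl.
  move/eqP: (hR F) => ->; move=> /imsetP [q]; rewrite inE => /andP [hq hs] e.
  exists q; split; first exact: (subsetP hRS).
  by rewrite /approx_pair /= e eqxx sys_sim_sym.
move=> h; apply/orP; right; apply/existsP.
exists [set q in S | [exists p in T, approx_pair p q]]; apply/andP; split.
  by apply/subsetP => q; rewrite inE => /andP [].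
apply/forallP => F; apply/eqP/setP => s; apply/imsetP/imsetP.
  move=> [p]; rewrite inE => /andP [hp hs] ->.
  have [q [hq ha]] := h p hp; exists q; last by case/andP: ha => /eqP.
  rewrite !inE hq /=; apply/andP; split.
    by apply/exists_inP; exists p.
  by case/andP: ha => _ ha; exact: sys_sim_trans (sys_sim_sym ha) hs.
move=> [q]; rewrite !inE => /andP [/andP [hq /exists_inP [p hp ha]] hs] ->.
exists p; last by case/andP: ha => /eqP.
by rewrite inE hp /=; case/andP: ha => _ ha; exact: sys_sim_trans ha hs.
Qed.


Lemma mem_team_g (T : {set asg}) (F : system) (p : asg * system) :
  (p \in team_g T F) = (p.2 == F) && (p.1 \in T).
Proof.
apply/imsetP/andP.
  by move=> [s hs ->]; rewrite eqxx.
by case: p => s G [/= /eqP -> hs]; exists s.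
Qed.

Lemma team_g1 (s : asg) (F : system) : team_g [set s] F = [set (s, F)].
Proof. by rewrite /team_g imset_set1. Qed.

Lemma sat_cg (phi : form) : forall (F : system) (T : {set asg}),
  sat_c F T phi <-> sat_g (team_g T F) phi.
Proof.
elim: phi => [X x|X|a IH|a IHa b IHb|a IHa b IHb|A b IH] F T /=.
- split.
    by move=> h p; rewrite mem_team_g => /andP [_ hp]; apply: h.
  by move=> h s hs; apply: (h (s, F)); rewrite mem_team_g eqxx.
- split.
    by move=> h p q; rewrite !mem_team_g => /andP [_ hp] /andP [_ hq]; apply: h.
  by move=> h s s' hs hs'; apply: (h (s, F) (s', F)); rewrite mem_team_g eqxx.
- split.
    move=> h p; rewrite mem_team_g => /andP [/eqP e hp]; case: p e hp => s G /= -> hs.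
    by rewrite -team_g1 -IH; apply: h.
  by move=> h s hs; rewrite IH team_g1; apply: h; rewrite mem_team_g eqxx.
- by rewrite IHa IHb.
- split.
    move=> [T1 [T2 [<- [h1 h2]]]]; exists (team_g T1 F), (team_g T2 F).
    by rewrite /team_g imsetU -IHa -IHb.
  move=> [U1 [U2 [hU [h1 h2]]]].
  have key : forall U : team, U \subset team_g T F -> team_g [set s | (s, F) \in U] F = U.
    move=> U /subsetP hs; apply/setP => p; rewrite mem_team_g inE.
    apply/andP/idP; first by case: p => s G [/= /eqP ->].
    move=> hp; have := hs p hp; rewrite mem_team_g => /andP [/eqP e _].
    by case: p e hp => s G /= ->.
  exists [set s | (s, F) \in U1], [set s | (s, F) \in U2]; split.
    by apply/setP => s; rewrite !inE -in_setU hU mem_team_g eqxx.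
  rewrite IHa IHb !key //; by rewrite -hU ?subsetUl ?subsetUr.
- have -> : [set (interv_s p.2 A p.1, intervF p.2 A) | p in team_g T F] =
            team_g [set interv_s F A s | s in T] (intervF F A).
    by rewrite /team_g -!imset_comp.
  by rewrite IH.
Qed.


Lemma preceq1 (q : asg * system) (T : team) :
  preceq_g [set q] T <-> exists r, r \in T /\ approx_pair q r.
Proof.
rewrite preceqP; split; first by move=> /(_ q); rewrite in_set1 eqxx => /(_ isT) [r [h1 h2]]; exists r.
by move=> [r [h1 h2]] p; rewrite in_set1 => /eqP ->; exists r.
Qed.

Lemma sat_Lc (T U : team) : compat_team U ->
  sat_g U (bigOr x0 [seq fAnd (Theta x0 [set p.1]) (Phi x0 p.2)
             | p <- enum [set p : asg * system |
                           (p.1 \in team_dash T) && ~~ preceq_g [set p] T]])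
  <-> forall q, q \in U -> q.1 \in team_dash T /\ ~ exists r, r \in T /\ approx_pair q r.
Proof.
move=> hc; rewrite sat_bigOr; last first.
  move=> phi /In_map [p [_ ->]]; apply: flat_And; [exact: flat_Theta | exact: flat_Phi].
have one : forall q, q \in U -> forall p : asg * system,
    sat_g [set q] (fAnd (Theta x0 [set p.1]) (Phi x0 p.2)) <-> approx_pair q p.
  move=> [s G] hq [s' F] /=; rewrite sat_Theta1 /= in_set1 (sat_Phi1 _ _ _ (hc _ hq)).
  by rewrite /approx_pair /=; split; [case=> -> -> | case/andP => -> ->].
split.
  move=> h q hq; have [phi [/In_map [p [hp ->]] /(one _ hq) ha]] := h q hq.
  move/In_mem: hp; rewrite mem_enum inE => /andP [hd hn].
  split; first by case/andP: ha => /eqP ->.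
  move=> [r [hr har]]; move/negP: hn; apply; apply/preceq1; exists r; split=> //.
  exact: approx_trans (approx_sym ha) har.
move=> h q hq; have [hd hn] := h q hq.
exists (fAnd (Theta x0 [set q.1]) (Phi x0 q.2)); split; last by apply/(one _ hq); apply: approx_refl.
apply: In_map_in; apply/In_mem; rewrite mem_enum inE hd /=; apply/negP => /preceq1; exact: hn.
Qed.

Lemma gen_main (S T : team) : compat_team S -> T != set0 ->
  (sat_g S (Xi_g x0 T) <-> ~~ preceq_g T S).
Proof.
move=> hc hT.
have hTc : 0 < #|classes T|.
  by rewrite card_gt0 classesE; apply: contra hT; rewrite imset_eq0.
rewrite /Xi_g; split.
  move=> [U1 [U2 [hU [[A [B [hAB [hA hB]]] hC]]]]].
  have hcA : compat_team A by apply: compat_sub hc; rewrite -hU -hAB -setUA subsetUl.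
  have hcC : compat_team U2 by apply: compat_sub hc; rewrite -hU subsetUr.
  move/(chik_card _ _ hcA): hA => hA.
  move/sat_Theta: hB => hB.
  move/(sat_Lc _ _ hcC): hC => hC.
  apply/negP => /preceqP hpre.
  have sub : classes T \subset classes A.
    apply/subsetP => c; rewrite !classesE => /imsetP [p hp ->].
    have [q [hq ha]] := hpre p hp.
    move: hq; rewrite -hU in_setU => /orP [|hq2].
      rewrite -hAB in_setU => /orP [hqA|hqB].
        by rewrite (cl_eq ha) imset_f.
      move: (hB q hqB); rewrite in_setC; case/andP: ha => /eqP <- _.
      by rewrite imset_f.
    have [_ hn] := hC q hq2; exfalso; apply: hn; exists p; split=> //.
    exact: approx_sym ha.
  move: (leq_trans (subset_leq_card sub) hA); lia.
move=> hnp.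
have [p0 [hp0 hn0]] : exists p0, p0 \in T /\ forall q, q \in S -> ~ approx_pair p0 q.
  apply: NNPP => hn; move/negP: hnp; apply; apply/preceqP => p hp.
  apply: NNPP => hq; apply: hn; exists p; split=> // q hq' ha; apply: hq; by exists q.
set A := [set q in S | [exists r in T, approx_pair r q]].
set B := [set q in S | q.1 \notin team_dash T].
set C := [set q in S | (q.1 \in team_dash T) && ~~ [exists r in T, approx_pair r q]].
exists (A :|: B), C; split.
  apply/setP => q; rewrite !inE; case: (q \in S); rewrite ?andbF //=.
  by case: (q.1 \in team_dash T); case: [exists r in T, approx_pair r q].
split; last first.
  apply/sat_Lc; first by apply: compat_sub hc; apply/subsetP => q; rewrite inE => /andP [].
  move=> q; rewrite inE => /andP [_ /andP [hd hn]]; split=> // [[r [hr ha]]].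
  move/negP: hn; apply; apply/exists_inP; exists r => //; exact: approx_sym ha.
exists A, B; split=> //; split.
  apply/chik_card; first by apply: compat_sub hc; apply/subsetP => q; rewrite inE => /andP [].
  have hpc : cl p0 \in classes T by rewrite classesE imset_f.
  have : classes A \subset classes T :\ cl p0.
    apply/subsetP => c; rewrite !classesE => /imsetP [q]; rewrite inE => /andP [hq /exists_inP [r hr ha]] ->.
    rewrite in_setD1 -(cl_eq ha) imset_f // andbT; apply/eqP => e.
    apply: (hn0 q hq); apply: approx_trans (cl_eqP (esym e)) ha.
  move/subset_leq_card => hle; apply: leq_trans hle _.
  by rewrite (cardsD1 (cl p0) (classes T)) hpc add1n subSS subn0.
apply/sat_Theta => q; rewrite !inE => /andP [_ h]; exact: h.
Qed.


Lemma preceq_cg (T S : {set asg}) (TF SF : system) : T != set0 ->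
  preceq_c (T, TF) (S, SF) = preceq_g (team_g T TF) (team_g S SF).
Proof.
move=> hT; apply/idP/idP.
  case/orP => [/eqP /= T0|/existsP [R /andP [hRS happ]]]; first by rewrite T0 eqxx in hT.
  move: happ; rewrite /approx_c /= => /andP [/andP [/andP [_ _] /eqP eTR] hs].
  apply/preceqP => p; rewrite mem_team_g => /andP [/eqP e2 hp1].
  exists (p.1, SF); split.
    by rewrite mem_team_g eqxx /=; apply: (subsetP hRS); rewrite -eTR.
  by rewrite /approx_pair /= eqxx e2.
move/preceqP => h; case/set0Pn: (hT) => s0 hs0.
have [q [hq ha]] := h (s0, TF) (imset_f _ hs0).
move: hq ha; rewrite mem_team_g => /andP [/eqP e2 _] /andP [_ hs]; rewrite e2 /= in hs.
apply/orP; right; apply/existsP; exists T; rewrite /approx_c /= hT eqxx hs !andbT /=.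
apply/subsetP => s hs'; have [q' [hq' ha']] := h (s, TF) (imset_f _ hs').
by move: hq' ha'; rewrite mem_team_g => /andP [_ hq1] /andP [/eqP /= ->].
Qed.

End Aux.

Theorem lemma5p5 (V : finType) (Ran : V -> finType) (X0 : V) (x0 : Ran X0)
  (HRan : forall X : V, 0 < #|Ran X|) :
  (* causal teams S = (S^-, SF), T = (T^-, TF), T nonempty *)
  (forall (SF TF : system Ran) (S T : {set asg Ran}),
      compatible_c SF S -> compatible_c TF T -> T != set0 ->
      (sat_c SF S (Xi_c x0 T TF) <-> ~~ preceq_c (T, TF) (S, SF)))
  /\
  (* generalized causal teams, T nonempty *)
  (forall S T : {set (asg Ran * system Ran)},
      compatible_g S -> compatible_g T -> T != set0 ->
      (sat_g S (Xi_g x0 T) <-> ~~ preceq_g T S)).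
Proof.
split.
  move=> SF TF S T hS _ hT.
  rewrite /Xi_c sat_cg (preceq_cg _ _ _ _ _ _ hT).
  apply: gen_main.
    move=> p; rewrite mem_team_g => /andP [/eqP -> hp].
    exact: (forall_inP hS _ hp).
  case/set0Pn: hT => s hs; apply/set0Pn; exists (s, TF); exact: imset_f.
move=> S T hS _ hT; apply: gen_main => //.
by move=> p hp; exact: (forall_inP hS _ hp).
Qed.
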